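(* Let $K\in\mathbb{N}_+$, let $\mathcal{H}$ be a separable real RKHS over a non-empty set $\mathcal{X}$ with reproducing kernel $\kappa$ that admits a complete interpolating sampling sequence $\{x_\lambda\}_{\lambda\in\Lambda}\subseteq\mathcal{X}$, and let $\mathcal{K}\subseteq\mathcal{H}$ be non-empty and locally compact. Then the set of restrictions to $\mathcal{K}$ of sampling-based neural operators $\hat f:\mathcal{H}\to\mathbb{R}^K$ is dense in $C(\mathcal{K},\mathbb{R}^K)$ for the compact-open topology (uniform convergence on compact subsets).
   Context: A sequence $\{x_\lambda\}_{\lambda\in\Lambda}\subseteq\mathcal{X}$, $\Lambda\subseteq\mathbb{N}$, is sampling if there is $C\ge1$ with $\|f\|/C\le(\sum_{\lambda}|f(x_\lambda)|^2)^{1/2}\le C\|f\|$ for all $f\in\mathcal{H}$; it is interpolating if for every square-summable $(v_\lambda)$ there is $f\in\mathcal{H}$ with $f(x_\lambda)=v_\lambda$ for all $\lambda$; complete interpolating sampling means both. A map $\hat f:\mathcal{H}\to\mathbb{R}^K$ is a sampling-based neural operator (SNO) if there exist $S,L\in\mathbb{N}_+$, points $x_1,\dots,x_S\in\mathcal{X}$, integers $d_0=S,d_1,\dots,d_{L+1}=K$ and affine maps $A_l:\mathbb{R}^{d_l}\to\mathbb{R}^{d_{l+1}}$ such that for all $f\in\mathcal{H}$, $\hat f(f)=A_L\circ(\mathrm{ReLU}\bullet A_{L-1})\circ\cdots\circ(\mathrm{ReLU}\bullet A_1)\big((\langle f,\kappa(\cdot,x_s)\rangle_{\mathcal{H}})_{s=1}^S\big)$,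 with $\mathrm{ReLU}(t)=\max\{t,0\}$ applied componentwise. *)

(* Defs.v *)
From HB Require Import structures.
From mathcomp Require Import all_boot all_order all_algebra.
From mathcomp Require Import all_classical all_reals all_analysis.
Set Implicit Arguments. Unset Strict Implicit. Unset Printing Implicit Defensive.
Import Order.TTheory GRing.Theory Num.Theory.
Import numFieldNormedType.Exports.
Local Open Scope classical_set_scope.
Local Open Scope ring_scope.

Section Defs.
Variable R : realType.

(* [ip] is an inner product on the normed space [V] inducing its norm.
   Together with [V : completeNormedModType R] this makes V a real Hilbert space. *)
Definition inner_product_inducing_norm (V : normedModType R) (ip : V -> V -> R) :=
  [/\ (forall u v, ip u v = ip v u),
      (forall (a : R) u v w, ip (a *: u + v) w = a * ip u w + ip v w)
    & (forall v, ip v v = `|v| ^+ 2)].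

Definition separable_space (T : topologicalType) :=
  exists D : set T, countable D /\ dense D.

(* V is (identified, via the injective linear map [ev], with) a space of real
   functions on X; [kappa] is the reproducing kernel: for each x, the function
   kappa(.,x) is the element [ksec x] of V, and <f, kappa(.,x)> = f(x). *)
Definition is_RKHS (X : Type) (V : normedModType R) (ip : V -> V -> R)
    (ev : V -> X -> R) (kappa : X -> X -> R) (ksec : X -> V) :=
  [/\ inner_product_inducing_norm ip,
      (forall (a : R) u v x, ev (a *: u + v) x = a * ev u x + ev v x),
      injective ev,
      (forall x y, ev (ksec x) y = kappa y x)
    & (forall f x, ip f (ksec x) = ev f x)].

(* sampling: exists C >= 1, ||f||/C <= (sum_{l in Lam} |f(x_l)|^2)^(1/2) <= C ||f||
   (stated after squaring, in the extended reals, so the sum may be infinite a priori) *)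
Definition sampling_seq (X : Type) (V : normedModType R) (ev : V -> X -> R)
    (Lam : set nat) (xs : nat -> X) :=
  exists C : R, 1 <= C /\
    forall f : V,
      (((`|f| / C) ^+ 2)%:E <= \esum_(l in Lam) ((ev f (xs l)) ^+ 2)%:E)%E /\
      (\esum_(l in Lam) ((ev f (xs l)) ^+ 2)%:E <= ((C * `|f|) ^+ 2)%:E)%E.

Definition interpolating_seq (X : Type) (V : normedModType R) (ev : V -> X -> R)
    (Lam : set nat) (xs : nat -> X) :=
  forall v : nat -> R,
    (\esum_(l in Lam) ((v l) ^+ 2)%:E < +oo)%E ->
    exists f : V, forall l, Lam l -> ev f (xs l) = v l.

Definition complete_interpolating_sampling (X : Type) (V : normedModType R)
    (ev : V -> X -> R) (Lam : set nat) (xs : nat -> X) :=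
  sampling_seq ev Lam xs /\ interpolating_seq ev Lam xs.

Definition locally_compact_subset (T : topologicalType) (A : set T) :=
  forall a, A a -> exists2 N, nbhs a N &
    exists C : set T, [/\ compact C, C `<=` A & N `&` A `<=` C].

(* [net n m]: a map R^n -> R^m of the form A_L o (ReLU o A_{L-1}) o ... o (ReLU o A_1),
   L >= 1, with affine maps A_l (vectors are row vectors, A(x) = x *m W + b). *)
Inductive net : nat -> nat -> Type :=
  | NOut n m : 'M[R]_(n, m) -> 'rV[R]_m -> net n m
  | NLayer n k m : 'M[R]_(n, k) -> 'rV[R]_k -> net k m -> net n m.

Definition relu_vec k (x : 'rV[R]_k) : 'rV[R]_k := \row_j Num.max (x 0 j) 0.

Fixpoint net_eval n m (N : net n m) : 'rV[R]_n -> 'rV[R]_m :=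
  match N in net n m return 'rV[R]_n -> 'rV[R]_m with
  | NOut _ _ W b => fun x => x *m W + b
  | NLayer _ _ _ W b N' => fun x => net_eval N' (relu_vec (x *m W + b))
  end.

Definition is_SNO (X : Type) (V : normedModType R) (ip : V -> V -> R)
    (ksec : X -> V) (Kout : nat) (F : V -> 'rV[R]_Kout) :=
  exists S : nat, (0 < S)%N /\
    exists (xs : 'I_S -> X) (N : net S Kout),
      forall f : V, F f = net_eval N (\row_s ip f (ksec (xs s))).

End Defs.

(* Main.v *)
Require Import Defs.
From HB Require Import structures.
From mathcomp Require Import all_boot all_order all_algebra.
From mathcomp Require Import all_classical all_reals all_analysis.
From mathcomp Require Import ring lra.
Import Order.TTheory GRing.Theory Num.Theory.
Import numFieldNormedType.Exports.
Local Open Scope classical_set_scope.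
Local Open Scope ring_scope.
Section Nets.
Variable R : realType.

Definition nfun n m (F : 'rV[R]_n -> 'rV[R]_m) :=
  exists N : net R n m, forall x, net_eval N x = F x.
Arguments nfun {n m} F.

Lemma nfun_aff n m (W : 'M[R]_(n, m)) b : nfun (fun x => x *m W + b).
Proof. by exists (NOut W b). Qed.
Arguments nfun_aff {n m} W b.

Lemma nfun_layer n k m (W : 'M[R]_(n, k)) b (G : 'rV_k -> 'rV_m) :
  nfun G -> nfun (fun x => G (relu_vec (x *m W + b))).
Proof. by move=> [N HN]; exists (NLayer W b N) => x /=; rewrite HN. Qed.
Arguments nfun_layer {n k m} W b {G}.

Lemma nfun_pre n k m (W : 'M[R]_(n, k)) b (G : 'rV_k -> 'rV_m) :
  nfun G -> nfun (fun x => G (x *m W + b)).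
Proof.
move=> [N HN]; case: N G W b HN => [k' m' W' b'|k' k'' m' W' b' N'] G W b HN.
  exists (NOut (W *m W') (b *m W' + b')) => x /=.
  by rewrite -HN /= mulmxDl mulmxA addrA.
exists (NLayer (W *m W') (b *m W' + b') N') => x /=.
by rewrite -HN /= mulmxDl mulmxA addrA.
Qed.
Arguments nfun_pre {n k m} W b {G}.

Lemma nfun_comp n k m (F : 'rV[R]_n -> 'rV[R]_k) (G : 'rV_k -> 'rV_m) :
  nfun F -> nfun G -> nfun (fun x => G (F x)).
Proof.
move=> [N HN]; elim: N F HN G => [n' k' W b|n' k' k'' W b N IH] F HN G HG.
  have -> : (fun x => G (F x)) = (fun x => G (x *m W + b)).
    by apply: funext => x; rewrite -HN.
  exact: nfun_pre.
have -> : (fun x => G (F x)) = (fun x => G (net_eval N (relu_vec (x *m W + b)))).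
  by apply: funext => x; rewrite -HN.
apply: (@nfun_layer _ _ _ W b (fun y => G (net_eval N y))); exact: (IH (net_eval N) (fun _ => erefl) G HG).
Qed.
Arguments nfun_comp {n k m F G}.

Lemma relu_row_mx a b (x : 'rV[R]_a) (y : 'rV[R]_b) :
  relu_vec (row_mx x y) = row_mx (relu_vec x) (relu_vec y).
Proof.
apply/matrixP => i j; rewrite !mxE; case: splitP => j' _; by rewrite !mxE.
Qed.

Lemma max0_oppK (t : R) : Num.max t 0 - Num.max (- t) 0 = t.
Proof. by case: (ler0P t) => h; case: (ler0P (- t)) => h'; lra. Qed.

Lemma relu_oppK a (x : 'rV[R]_a) : relu_vec x - relu_vec (- x) = x.
Proof.
apply/matrixP => i j; rewrite !mxE (ord1 i); exact: max0_oppK.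
Qed.

Lemma nfun_idsum n m p (F : 'rV[R]_n -> 'rV[R]_m) :
  nfun F -> nfun (fun z : 'rV_(n + p) => row_mx (F (lsubmx z)) (rsubmx z)).
Proof.
move=> [N HN]; elim: N F HN => [n' m' W b|n' k m' W b N IH] F HN.
  exists (NOut (block_mx W 0 0 1%:M) (row_mx b 0)) => z /=.
  rewrite -HN /= -{1}(hsubmxK z) mul_row_block.
  by rewrite ?(mul0mx, mulmx0, mulmx1, addr0, add0r, add_row_mx).
have IH' := IH (net_eval N) (fun _ => erefl).
pose W1 : 'M[R]_(n' + p, k + (p + p)) :=
  block_mx W (row_mx 0 0) 0 (row_mx 1%:M (- 1%:M)).
pose b1 : 'rV[R]_(k + (p + p)) := row_mx b 0.
pose W2 : 'M[R]_(k + (p + p), k + p) :=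
  col_mx (row_mx 1%:M 0) (row_mx 0 (col_mx 1%:M (- 1%:M))).
have H2 := nfun_pre W2 0 IH'.
have H3 := nfun_layer W1 b1 H2.
suff -> : (fun z : 'rV_(n' + p) => row_mx (F (lsubmx z)) (rsubmx z)) =
  (fun z => row_mx (net_eval N (lsubmx (relu_vec (z *m W1 + b1) *m W2 + 0)))
     (rsubmx (relu_vec (z *m W1 + b1) *m W2 + 0))) by [].
apply: funext => z.
have E1 : z *m W1 + b1 = row_mx (lsubmx z *m W + b)
    (row_mx (rsubmx z) (- rsubmx z)).
  rewrite /W1 /b1 -{1}(hsubmxK z) mul_row_block ?mul_mx_row.
  by rewrite ?(mul0mx, mulmx0, mulmx1, mulmxN, addr0, add0r, add_row_mx).
rewrite E1 !relu_row_mx /W2 addr0 mul_row_col ?mul_mx_row ?mul_row_col.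
rewrite ?(mul0mx, mulmx0, mulmx1, mulmxN, addr0, add0r, add_row_mx).
by rewrite row_mxKl row_mxKr relu_oppK -HN.
Qed.
Arguments nfun_idsum {n m} p {F}.

Lemma nfun_swap a b :
  nfun (fun z : 'rV[R]_(a + b) => row_mx (rsubmx z) (lsubmx z)).
Proof.
exists (NOut (col_mx (row_mx 0 1%:M) (row_mx 1%:M 0)) 0) => z /=.
rewrite addr0 -{1}(hsubmxK z) mul_row_col ?mul_mx_row.
by rewrite ?(mul0mx, mulmx0, mulmx1, mulmxN, addr0, add0r, add_row_mx).
Qed.

Lemma nfun_pair n m1 m2 (F : 'rV[R]_n -> 'rV[R]_m1) (G : 'rV_n -> 'rV_m2) :
  nfun F -> nfun G -> nfun (fun x => row_mx (F x) (G x)).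
Proof.
move=> hF hG.
have h1 : nfun (fun x : 'rV[R]_n => row_mx x x).
  exists (NOut (row_mx 1%:M 1%:M) 0) => x /=.
  by rewrite addr0 mul_mx_row mulmx1.
have h2 := nfun_comp h1 (nfun_idsum n hF).
have h3 := nfun_comp h2 (nfun_swap m1 n).
have h4 := nfun_comp h3 (nfun_idsum m1 hG).
have h5 := nfun_comp h4 (nfun_swap m2 m1).
move: h5; congr nfun; apply: funext => x.
by rewrite !(row_mxKl, row_mxKr).
Qed.
Arguments nfun_pair {n m1 m2 F G}.

Definition sfun n (phi : 'rV[R]_n -> R) := nfun (fun z => (phi z)%:M : 'rV_1).
Arguments sfun {n} phi.

Lemma sfun_const n c : sfun (fun _ : 'rV[R]_n => c).
Proof. by exists (NOut 0 c%:M) => x /=; rewrite mulmx0 add0r. Qed.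

Lemma sfun_coord n (s : 'I_n) : sfun (fun z : 'rV[R]_n => z 0 s).
Proof.
exists (NOut (delta_mx s 0) 0) => z /=; rewrite addr0 -colE.
by apply/matrixP => i j; rewrite (ord1 i) (ord1 j) !mxE eqxx mulr1n.
Qed.

Lemma sfun_lin n (phi psi : 'rV[R]_n -> R) a b c :
  sfun phi -> sfun psi -> sfun (fun z => a * phi z + b * psi z + c).
Proof.
move=> h1 h2; have h := nfun_pair h1 h2.
have := nfun_comp h (nfun_aff (col_mx a%:M b%:M) c%:M).
congr nfun; apply: funext => z.
rewrite mul_row_col -!scalar_mxM !raddfD /=.
by rewrite [phi z * a]mulrC [psi z * b]mulrC.
Qed.

Lemma sfun_relu n (phi : 'rV[R]_n -> R) :
  sfun phi -> sfun (fun z => Num.max (phi z) 0).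
Proof.
move=> h; have := nfun_comp h (nfun_layer 1%:M 0 (nfun_aff 1%:M 0)).
congr nfun; apply: funext => z.
rewrite !addr0 !mulmx1; apply/matrixP => i j.
by rewrite (ord1 i) (ord1 j) !mxE eqxx !mulr1n.
Qed.

End Nets.
Arguments nfun {R n m} F.
Arguments sfun {R n} phi.
Arguments nfun_aff {R n m} W b.
Arguments nfun_layer {R n k m} W b {G}.
Arguments nfun_pre {R n k m} W b {G}.
Arguments nfun_comp {R n k m F G}.
Arguments nfun_idsum {R n m} p {F}.
Arguments nfun_pair {R n m1 m2 F G}.
Arguments sfun_const {R} n c.
Arguments sfun_coord {R n} s.
Arguments sfun_lin {R n phi psi} a b c.
Arguments sfun_relu {R n phi}.
Section Nets2.
Variable R : realType.
Set Implicit Arguments. Unset Strict Implicit.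

Lemma sfun_add n (phi psi : 'rV[R]_n -> R) :
  sfun phi -> sfun psi -> sfun (fun z => phi z + psi z).
Proof.
move=> h1 h2; have := sfun_lin 1 1 0 h1 h2; congr sfun.
by apply: funext => z; rewrite !mul1r addr0.
Qed.

Lemma sfun_scale n (phi : 'rV[R]_n -> R) a c :
  sfun phi -> sfun (fun z => a * phi z + c).
Proof.
move=> h1; have := sfun_lin a 0 c h1 h1; congr sfun.
by apply: funext => z; rewrite mul0r addr0.
Qed.

Lemma sfun_max n (phi psi : 'rV[R]_n -> R) :
  sfun phi -> sfun psi -> sfun (fun z => Num.max (phi z) (psi z)).
Proof.
move=> h1 h2; have h3 := sfun_relu (sfun_lin 1 (-1) 0 h1 h2).
have := sfun_add h3 h2; congr sfun; apply: funext => z.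
set a := phi z; set b := psi z.
by case: (lerP a b) => h; case: (ler0P (1 * a + -1 * b + 0)) => h'; lra.
Qed.

Lemma sfun_abs n (phi : 'rV[R]_n -> R) :
  sfun phi -> sfun (fun z => `|phi z|).
Proof.
move=> h1; have h2 := sfun_relu h1; have h3 := sfun_relu (sfun_scale (-1) 0 h1).
have := sfun_add h2 h3; congr sfun; apply: funext => z.
set a := phi z.
by case: (ler0P a) => h; case: (ler0P (-1 * a + 0)) => h'; rewrite ?ger0_norm ?ler0_norm //; lra.
Qed.

Lemma sfun_sum n (I : Type) (s : seq I) (f : I -> 'rV[R]_n -> R) :
  (forall i, sfun (f i)) -> sfun (fun z => \sum_(i <- s) f i z).
Proof.
move=> hf; elim: s => [|i s IH].
  by have := sfun_const n (0 : R); congr sfun; apply: funext => z; rewrite big_nil.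
have := sfun_add (hf i) IH; congr sfun; apply: funext => z; by rewrite big_cons.
Qed.

Definition maxl (I : Type) (f : I -> R) (c0 : I) (s : seq I) :=
  foldr (fun c acc => Num.max (f c) acc) (f c0) s.

Lemma sfun_maxl n (I : Type) (c0 : I) (s : seq I) (f : I -> 'rV[R]_n -> R) :
  (forall i, sfun (f i)) -> sfun (fun z => maxl (f^~ z) c0 s).
Proof.
move=> hf; elim: s => [|i s IH]; first exact: hf.
exact: (sfun_max (hf i) IH).
Qed.

Lemma nfun_row n m (phi : 'I_m -> 'rV[R]_n -> R) :
  (forall j, sfun (phi j)) -> nfun (fun z => \row_j phi j z).
Proof.
elim: m phi => [|m IH] phi hphi.
  by exists (NOut 0 0) => z; apply/matrixP => i [j hj]; exfalso; by rewrite ltn0 in hj.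
have h := nfun_pair (hphi ord0) (IH (fun j => phi (lift ord0 j)) (fun j => hphi _)).
move: h; congr nfun; apply: funext => z.
apply/matrixP => i j; rewrite !mxE; case: splitP => j' hj; rewrite !mxE.
  rewrite (ord1 i) (ord1 j') eqxx mulr1n; congr phi; apply: val_inj => /=.
  by rewrite hj (ord1 j').
congr phi; apply: val_inj => /=; rewrite hj /bump /=; by [].
Qed.

End Nets2.
Arguments sfun_add {R n phi psi}.
Arguments sfun_scale {R n phi} a c.
Arguments sfun_max {R n phi psi}.
Arguments sfun_abs {R n phi}.
Arguments sfun_sum {R n I} s {f}.
Arguments maxl {R I} f c0 s.
Arguments sfun_maxl {R n I} c0 s {f}.
Arguments nfun_row {R n m phi}.
Section Analysis.
Variable R : realType.

Lemma maxl_ge (I : eqType) (f : I -> R) c0 s c :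
  c = c0 \/ c \in s -> f c <= maxl f c0 s.
Proof.
have h0 : forall s, f c0 <= maxl f c0 s.
  by elim=> [|a t IH] /=; rewrite ?lexx // le_max IH orbT.
case=> [->|]; first exact: h0.
elim: s => [|a s IH] //=; rewrite in_cons => /orP[/eqP->|hc].
  by rewrite le_max lexx.
by rewrite le_max IH ?orbT.
Qed.

Lemma maxl_le (I : eqType) (f : I -> R) c0 s a :
  f c0 <= a -> (forall c, c \in s -> f c <= a) -> maxl f c0 s <= a.
Proof.
move=> h0; elim: s => [|b s IH] //= hs.
rewrite ge_max hs ?mem_head // IH // => c hc; apply: hs.
by rewrite in_cons hc orbT.
Qed.

Lemma term_le (F : nat -> R) n l : (l < n)%N -> (forall j, 0 <= F j) ->
  F l <= \sum_(j < n) F j.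
Proof.
move=> hl hF; rewrite (bigD1 (Ordinal hl)) //= lerDl.
by apply: sumr_ge0 => j _.
Qed.

Lemma tri4 (a b a' b' : R) : `|a - b| <= `|a - a'| + `|a' - b'| + `|b' - b|.
Proof.
have -> : a - b = (a - a') + (a' - b') + (b' - b) by ring.
apply: le_trans (ler_normD _ _) _; rewrite lerD2r; exact: ler_normD.
Qed.

Lemma entry_le_norm m n (M : 'M[R]_(m, n)) i j : `|M i j| <= `|M|.
Proof.
rewrite [leRHS]/Num.Def.normr /= mx_normrE; apply/bigmax_geP; right => /=.
by exists (i, j).
Qed.

Lemma norm_le_entries m n (M : 'M[R]_(m, n)) a : 0 <= a ->
  (forall i j, `|M i j| <= a) -> `|M| <= a.
Proof.
move=> a0 h; rewrite [leLHS]/Num.Def.normr /= mx_normrE.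
apply: bigmax_le => // -[i j] _; exact: h.
Qed.

Variable V : normedModType R.

Lemma ip_addl (ip : V -> V -> R) : inner_product_inducing_norm ip ->
  forall u v w, ip (u + v) w = ip u w + ip v w.
Proof. by case=> _ hl _ u v w; have := hl 1 u v w; rewrite scale1r mul1r. Qed.

Lemma ip_scalel (ip : V -> V -> R) : inner_product_inducing_norm ip ->
  forall a u w, ip (a *: u) w = a * ip u w.
Proof.
move=> hip a u w; have h0 : ip 0 w = 0.
  by have := ip_addl hip 0 0 w; rewrite addr0 => h; lra.
by case: hip => _ hl _; have := hl a u 0 w; rewrite addr0 h0 addr0.
Qed.

Lemma ip_subl (ip : V -> V -> R) : inner_product_inducing_norm ip ->
  forall u v w, ip (u - v) w = ip u w - ip v w.
Proof.
move=> hip u v w; rewrite ip_addl // -scaleN1r ip_scalel //; ring.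
Qed.

Lemma ip_CS (ip : V -> V -> R) : inner_product_inducing_norm ip ->
  forall u k, `|ip u k| <= `|u| * `|k|.
Proof.
move=> hip.
have key : forall u k, ip u k <= `|u| * `|k|.
  move=> u k; have [hs _ hn] := hip.
  have e1 : ip (u + k) (u + k) = ip u u + 2 * ip u k + ip k k.
    rewrite ip_addl // (hs u (u + k)) (hs k (u + k)) !ip_addl // (hs k u); ring.
  have e2 : ip (u - k) (u - k) = ip u u - 2 * ip u k + ip k k.
    rewrite ip_subl // (hs u (u - k)) (hs k (u - k)) !ip_subl // (hs k u); ring.
  rewrite !hn in e1 e2.
  have h1 := ler_normD u k; have h2 := ler_dist_dist u k.
  have n1 := normr_ge0 u; have n2 := normr_ge0 k.
  have n3 := normr_ge0 (u + k); have n4 := normr_ge0 (u - k).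
  have h3 : (`|u| - `|k|) ^+ 2 <= `|u - k| ^+ 2.
    rewrite -real_normK ?num_real //; apply: lerXn2r => //; rewrite ?nnegrE //.
  have h4 : `|u + k| ^+ 2 <= (`|u| + `|k|) ^+ 2.
    by apply: lerXn2r => //; rewrite ?nnegrE ?addr_ge0.
  nra.
move=> u k; rewrite ler_norml key andbT.
have := key (- u) k; rewrite normrN -scaleN1r ip_scalel //; lra.
Qed.

End Analysis.
Lemma ev_sub (R : realType) (X : Type) (V : normedModType R) (ip : V -> V -> R)
    (ev : V -> X -> R) kappa ksec :
  is_RKHS ip ev kappa ksec -> forall f c x, ev (f - c) x = ev f x - ev c x.
Proof.
case=> _ hev _ _ _ f c x; have := hev (-1) c f x.
by rewrite scaleN1r addrC => ->; ring.
Qed.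

Lemma ev_diff (R : realType) (X : Type) (V : normedModType R) (ip : V -> V -> R)
    (ev : V -> X -> R) kappa ksec :
  is_RKHS ip ev kappa ksec ->
  forall f c x, `|ev f x - ev c x| <= `|f - c| * `|ksec x|.
Proof.
move=> hR f c x; have [hip _ _ _ hrep] := hR.
by rewrite -!hrep -ip_subl //; apply: ip_CS.
Qed.

Lemma samp_inj (R : realType) (X : Type) (V : normedModType R) (ip : V -> V -> R)
    (ev : V -> X -> R) kappa ksec Lam xs :
  is_RKHS ip ev kappa ksec -> complete_interpolating_sampling ev Lam xs ->
  forall f c, (forall l, Lam l -> ev f (xs l) = ev c (xs l)) -> f = c.
Proof.
move=> hR [[C0 [C1 hS]] _] f c hfc.
have [h1 _] := hS (f - c).
have E : (\esum_(l in Lam) ((ev (f - c) (xs l)) ^+ 2)%:E = 0)%E.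
  by apply: esum1 => l Ll; rewrite (ev_sub hR) hfc // subrr expr0n.
rewrite E lee_fin in h1.
have h2 : `|f - c| / C0 = 0.
  have : (`|f - c| / C0) ^+ 2 == 0 by rewrite eq_le h1 /= sqr_ge0.
  by rewrite expf_eq0 /= => /eqP.
move: h2 => /eqP; rewrite mulf_eq0 invr_eq0 normr_eq0 subr_eq0 => /orP[/eqP//|].
by move=> /eqP C00; exfalso; move: C1; rewrite C00; lra.
Qed.
Theorem mainTheorem7 (R : realType) (Kout : nat) (X : Type)
    (V : completeNormedModType R) (ip : V -> V -> R) (ev : V -> X -> R)
    (kappa : X -> X -> R) (ksec : X -> V) (Lam : set nat) (xs : nat -> X)
    (Kset : set V) :
  (0 < Kout)%N ->
  inhabited X ->
  is_RKHS ip ev kappa ksec ->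
  separable_space V ->
  complete_interpolating_sampling ev Lam xs ->
  Kset !=set0 ->
  locally_compact_subset Kset ->
  forall g : V -> 'rV[R]_Kout, {within Kset, continuous g} ->
  forall C : set V, compact C -> C `<=` Kset ->
  forall eps : R, 0 < eps ->
  exists F : V -> 'rV[R]_Kout,
    is_SNO ip ksec F /\ (forall f, C f -> `|g f - F f| < eps).
Proof.
move=> Kpos [x0] hR hsep hCIS Kne Klc g hg C cC CK eps eps0.
have [hip hev hinj hk hrep] := hR.
have [Cne|C0] := pselect (C !=set0); last first.
  exists (fun _ => 0); split; last by move=> f Cf; exfalso; apply: C0; exists f.
  exists 1%N; split => //; exists (fun _ => x0), (NOut 0 0) => f /=.
  by rewrite mulmx0 addr0.
case: Cne => c0 Cc0.
pose e := eps / 4; have e0 : 0 < e by rewrite divr_gt0.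
pose d (n : nat) (f c : V) : R := \sum_(l < n) `|ev f (xs l) - ev c (xs l)|.
have d_ge0 : forall n f c, 0 <= d n f c by move=> *; apply: sumr_ge0.
have hgC : forall f, C f -> forall e', 0 < e' ->
    exists2 r, 0 < r & forall t, Kset t -> `|f - t| < r -> `|g f - g t| < e'.
  move=> f Cf e' e'0.
  have := (subspace_continuousP _ _).1 hg f (CK f Cf).
  move=> /cvgr_dist_lt /(_ e' e'0) H.
  have /nbhs_ballP[r r0 Hr] : nbhs f (fun t => Kset t -> `|g f - g t| < e') := H.
  exists r => // t Kt ft; apply: Hr => //; by rewrite -ball_normE.
have key : exists n, (0 < n)%N /\ forall f c, C f -> C c ->
    d n f c < n.+1%:R^-1 -> `|g f - g c| < e.
  have cD : compact (C `*` C) := compact_setX cC cC.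
  have HN : \forall i \near eventually, (C `*` C) `<=`
      (fun x : V * V => d i x.1 x.2 < i.+1%:R^-1 -> `|g x.1 - g x.2| < e).
    apply: ((near_covering_withinP _).2 ((compact_near_coveringP _).1 cD)).
    move=> [f c] [/= Cf Cc].
    have [fc|fc] := pselect (f = c).
      subst c; have [r r0 Hr] := hgC f Cf (e / 2) (divr_gt0 e0 (ltr0Sn _ 1)).
      exists (ball (f, f) r, setT); first by split; [exact: nbhsx_ballx|exact: filterT].
      case=> [[f' c'] i] /= [[Bf Bc] _] [/= Cf' Cc'] _.
      rewrite -ball_normE /ball_ /= in Bf Bc.
      have h1 := Hr f' (CK _ Cf') Bf; have h2 := Hr c' (CK _ Cc') Bc.
      have -> : g f' - g c' = (g f - g c') - (g f - g f').
        by rewrite [RHS]addrC opprB addrA subrK.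
      apply: le_lt_trans (ler_normB _ _) _; lra.
    have [l Ll hl] : exists2 l, Lam l & ev f (xs l) != ev c (xs l).
      apply: contrapT => H; apply: fc; apply: (samp_inj hR hCIS) => l Ll.
      by apply: contrapT => hne; apply: H; exists l => //; apply/eqP.
    pose gam := `|ev f (xs l) - ev c (xs l)|.
    have gam0 : 0 < gam by rewrite normr_gt0 subr_eq0.
    pose kk := `|ksec (xs l)|.
    have kk0 : 0 <= kk by apply: normr_ge0.
    pose r := gam / (4 * (kk + 1)).
    have r0 : 0 < r by rewrite divr_gt0 // mulr_gt0 // ltr_pwDr.
    have rkk : r * kk < gam / 4.
      have hr : r * (4 * (kk + 1)) = gam.
        by rewrite /r divfK // mulf_neq0 // ?pnatr_eq0 // gt_eqF // ltr_pwDr.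
      nra.
    have g20 : 0 < gam / 2 by rewrite divr_gt0.
    exists (ball (f, c) r, [set i | (l < i)%N /\ i.+1%:R^-1 < gam / 2]).
      split; first exact: nbhsx_ballx.
      apply: filterI; first exact: nbhs_infty_gt.
      exact: (near_infty_natSinv_lt (PosNum g20)).
    case=> [[f' c'] i] /= [[Bf Bc] [li hi]] [/= Cf' Cc'] hd.
    rewrite -ball_normE /ball_ /= in Bf Bc.
    exfalso.
    have h1 := ev_diff hR f f' (xs l); have h2 := ev_diff hR c c' (xs l).
    have h3 : `|f - f'| * kk <= r * kk by rewrite ler_wpM2r // ltW.
    have h4 : `|c - c'| * kk <= r * kk by rewrite ler_wpM2r // ltW.
    have h5 := tri4 (ev f (xs l)) (ev c (xs l)) (ev f' (xs l)) (ev c' (xs l)).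
    have h6 : `|ev f' (xs l) - ev c' (xs l)| <= d i f' c'.
      by apply: (term_le (F := fun j => `|ev f' (xs j) - ev c' (xs j)|) li) => j.
    rewrite [`|ev c' _ - _|]distrC -/gam in h5; rewrite -/kk in h1 h2.
    have : gam <= gam / 4 + d i f' c' + gam / 4 by lra.
    have H2 := lt_trans hd hi.
    lra.
  have H0 : \forall i \near eventually, (0 < i)%N by exact: nbhs_infty_gt.
  have [i [Hi Hi0]] := filter_ex (filterI HN H0).
  exists i; split => // f c Cf Cc; exact: (Hi (f, c)).
have [n [n0 Hn]] := key.
have cover : forall rho, 0 < rho -> exists s : seq V,
    (forall c, c \in s -> C c) /\ forall f, C f -> exists2 c, c \in s & d n f c < rho.
  move=> rho rho0.
  pose Kn := \sum_(l < n) `|ksec (xs l)|.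
  have Kn0 : 0 <= Kn by apply: sumr_ge0.
  pose r := rho / (Kn + 1).
  have r0 : 0 < r by rewrite divr_gt0 // ltr_pwDr.
  have hr : r * (Kn + 1) = rho by rewrite /r divfK // gt_eqF // ltr_pwDr.
  move: (cC); rewrite compact_cover => /(_ V C (fun c => ball c r)).
  case.
  - by move=> c _; exact: ball_open.
  - by move=> f Cf; exists f => //; exact: ballxx.
  move=> D' sub cov; exists (finmap.enum_fset D'); split.
    move=> c hc; have : c \in C by apply: sub.
    by rewrite in_setE.
  move=> f Cf; have [c /= Dc Bc] := cov f Cf.
  exists c => //.
  rewrite -ball_normE /ball_ /= in Bc.
  have h1 : d n f c <= `|f - c| * Kn.
    rewrite /d /Kn mulr_sumr; apply: ler_sum => l _; exact: ev_diff hR _ _ _.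
  rewrite distrC in Bc.
  have h2 : `|f - c| * Kn <= r * Kn by rewrite ler_wpM2r // ltW.
  nra.
pose eta : R := n.+1%:R^-1.
have eta0 : 0 < eta by rewrite invr_gt0 ltr0Sn.
have [s1 [s1C s1c]] := cover eta eta0.
pose B := maxl (fun c => `|g c|) c0 s1 + e.
have hB : forall f, C f -> `|g f| <= B.
  move=> f Cf; have [c cs hd] := s1c f Cf; have H1 := Hn f c Cf (s1C c cs) hd.
  have H2 := maxl_ge (fun c => `|g c|) (c0 := c0) (or_intror cs).
  have H3 := ler_normD (g c) (g f - g c); rewrite addrC subrK in H3.
  simpl in H2; rewrite /B; lra.
have B0 : e <= B.
  have := maxl_ge (fun c => `|g c|) (c0 := c0) (s := s1) (or_introl erefl).
  have := normr_ge0 (g c0); rewrite /B /=; lra.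
pose L := 2 * B / eta.
have L0 : 0 <= L by rewrite /L divr_ge0 // ?mulr_ge0 // ltW // (lt_le_trans e0).
have Leta : L * eta = 2 * B by rewrite /L divfK // gt_eqF.
pose rho := Num.min eta (e / (L + 1)).
have L10 : 0 < L + 1 by rewrite ltr_wpDl.
have rho0 : 0 < rho by rewrite lt_min eta0 divr_gt0.
have rhoeta : rho <= eta by rewrite ge_min lexx.
have rhoL : rho * (L + 1) <= e.
  rewrite -ler_pdivlMr // /rho ge_min lexx orbT //.
have [s2 [s2C s2c]] := cover rho rho0.
pose h (k : 'I_Kout) (z : 'rV[R]_n) := maxl (fun c => - L *
  (\sum_(s <- index_enum 'I_n) `|1 * z 0 s + - ev c (xs s)|) + g c 0 k) c0 s2.
have hsf : forall k, sfun (h k).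
  move=> k; apply: (sfun_maxl c0 s2) => c.
  exact: (sfun_scale (- L) (g c 0 k) (sfun_sum (index_enum 'I_n)
    (fun s => sfun_abs (sfun_scale 1 (- ev c (xs s)) (sfun_coord s))))).
have [N HN] := nfun_row hsf.
exists (fun f => \row_k h k (\row_s ip f (ksec (xs s)))).
split.
  exists n; split => //; exists (fun s : 'I_n => xs s), N => f; by rewrite HN.
move=> f Cf.
have hz : forall c, (\sum_(s <- index_enum 'I_n)
    `|1 * (\row_s ip f (ksec (xs s)) : 'rV_n) 0 s + - ev c (xs s)|) = d n f c.
  by move=> c; rewrite /d; apply: eq_bigr => s _; rewrite mxE hrep mul1r.
have e2 : 2 * e < eps by rewrite /e; lra.
apply: le_lt_trans e2; apply: norm_le_entries; first by lra.
move=> i j; rewrite !mxE (ord1 i).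
set G := g f 0 j.
have -> : h j (\row_s ip f (ksec (xs s))) =
    maxl (fun c => - L * d n f c + g c 0 j) c0 s2.
  by rewrite /h; congr maxl; apply: funext => c; rewrite hz.
have Gb : `|G| <= B by apply: le_trans (hB f Cf); exact: entry_le_norm.
have close : forall c, C c -> d n f c < eta -> `|G - g c 0 j| < e.
  move=> c Cc hdc; have := Hn f c Cf Cc hdc.
  apply: le_lt_trans; rewrite /G; have := entry_le_norm (g f - g c) 0 j; by rewrite !mxE.
have up : forall c, C c -> - L * d n f c + g c 0 j <= G + e.
  move=> c Cc; have Ld := mulr_ge0 L0 (d_ge0 n f c).
  have [hdc|hdc] := ltP (d n f c) eta.
    have := close c Cc hdc; rewrite ltr_norml => /andP[h1 h2]; nra.
  have gcb : `|g c 0 j| <= B by apply: le_trans (hB c Cc); exact: entry_le_norm.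
  have := ler_wpM2l L0 hdc; move: Gb gcb; rewrite !ler_norml.
  move=> /andP[? ?] /andP[? ?]; nra.
have hup : maxl (fun c => - L * d n f c + g c 0 j) c0 s2 <= G + e.
  apply: maxl_le; first exact: up.
  by move=> c cs; apply: up; apply: s2C.
have [c cs hdc] := s2c f Cf.
have hlow := maxl_ge (fun c => - L * d n f c + g c 0 j) (c0 := c0) (or_intror cs).
simpl in hlow.
have := close c (s2C c cs) (lt_le_trans hdc rhoeta).
rewrite ltr_norml => /andP[h1 h2].
have h3 : L * d n f c <= L * rho by rewrite ler_wpM2l // ltW.
rewrite ler_norml; apply/andP; split; nra.
Qed.
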